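(* Let Assumptions (A1), (A3), (A4) and (A15) below hold, let $C\in\mathbb{R}$, and assume that $\Pi^\star$ is minimal. Then there exist $N_0\in\mathbb{N}$ and $\delta_2\in\mathcal L$ such that for all $x,y\in\mathbb{X}_{\mathrm{pi}}(C,N_0)$ and all $N\ge N_0$ $$\tilde V_N^\beta(y)-\lambda(y)-\tilde V_N^\beta(x)+\lambda(x)\le V_N^\beta(y)-V_N^\beta(x)+\delta_2(N).$$
   Context: System $x(k+1)=f(x(k),u(k))$ with constraint sets $\mathbb{X}\subset\mathbb{R}^n$, $\mathbb{U}\subset\mathbb{R}^m$ and stage cost $\ell:\mathbb{X}\times\mathbb{U}\to\mathbb{R}$, which is assumed non-negative. For $u\in\mathbb{U}^T$, $x_u(0,x)=x$, $x_u(k+1,x)=f(x_u(k,x),u(k))$; $\mathbb{U}^T(x)$ is the set of $u\in\mathbb{U}^T$ with $x_u(k,x)\in\mathbb{X}$ for $k=0,\dots,T$. A feasible $p$-periodic orbit is $\Pi\in(\mathbb{X}\times\mathbb{U})^p$ with $\Pi_\mathbb{X}([k+1]_p)=f(\Pi(k))$ ($[k]_p$ = $k$ mod $p$); it is minimal if $\Pi_\mathbb{X}(k)=\Pi_\mathbb{X}(j)$ implies $k=j$. $\|(x,u)\|_\Pi:=\min_k\|(x,u)-\Pi(k)\|$, $\|x\|_{\Pi_\mathbb{X}}:=\min_k\|x-\Pi_\mathbb{X}(k)\|$; $\ell^\star:=\inf$ over all feasible periodic orbits of $\frac1p\sum_{k=0}^{p-1}\ell(\Pi(k))$; $\Pi^\star$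 is a fixed feasible $p^\star$-periodic orbit attaining $\ell^\star$. $\mathcal L$: continuous decreasing functions $[0,\infty)\to[0,\infty)$ tending to $0$. (A1) $f,\ell$ continuous, $\mathbb{X},\mathbb{U}$ compact. (A3) There are $\lambda:\mathbb{X}\to\mathbb{R}$, $\bar\lambda$ with $|\lambda|\le\bar\lambda$ on $\mathbb{X}$, and $\underline\alpha_{\tilde\ell}\in\mathcal K_\infty$ such that $\tilde\ell(x,u):=\ell(x,u)-\ell^\star+\lambda(x)-\lambda(f(x,u))\ge\underline\alpha_{\tilde\ell}(\|(x,u)\|_{\Pi^\star})$ for all $x\in\mathbb{X}$, $u\in\mathbb{U}^1(x)$. (A4) There are $\kappa>0$, $M'\in\mathbb{N}$, $\rho\in\mathcal K_\infty$ such that for all $z\in\{\Pi^\star_\mathbb{X}(k)\}$ and $x,y\in\mathbb{X}$ with $\|x-z\|,\|y-z\|\le\kappa$ there is $u\in\mathbb{U}^{M'}(x)$ with $x_u(M',x)=y$ and $\|(x_u(k,x),u(k))\|_{\Pi^\star}\le\rho(\max\{\|x\|_{\Pi^\star_\mathbb{X}},\|y\|_{\Pi^\star_\mathbb{X}}\})$ for $k=0,\dots,M'-1$. (A15) $\lambda$ is continuous and there is $\overline\alpha_\lambda\in\mathcal K_\infty$ with $|\lambda(x)-\lambda(\Pi^\star_\mathbb{X}(k))|\le\overline\alpha_\lambda(\|x-\Pi^\star_\mathbb{X}(k)\|)$ for all $x\in\mathbb{X}$, $k=0,\dots,p^\star-1$. Discounted MPC: $\beta_N(k)=\frac{N-k}{N}$,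 $V_N^\beta(x)=\inf_{u\in\mathbb{U}^N(x)}\sum_{k=0}^{N-1}\beta_N(k)\ell(x_u(k,x),u(k))$ and $\tilde V_N^\beta(x)=\inf_{u\in\mathbb{U}^N(x)}\sum_{k=0}^{N-1}\beta_N(k)\tilde\ell(x_u(k,x),u(k))$. $\mathbb{X}_{\mathrm{pi}}(C,N_0)$ is the set of $x\in\mathbb{X}$ with $V_N^\beta(x)-\frac{N+1}{2}\ell^\star+\lambda(x)+\bar\lambda\le C$ for all $N\ge N_0$. *)

(* Defs.v *)
From HB Require Import structures.
From mathcomp Require Import all_boot all_order all_algebra.
From mathcomp Require Import all_classical all_reals all_analysis.
Set Implicit Arguments. Unset Strict Implicit. Unset Printing Implicit Defensive.
Import Order.TTheory GRing.Theory Num.Theory.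
Import numFieldNormedType.Exports.
Local Open Scope classical_set_scope.
Local Open Scope ring_scope.

Section Defs.
Variables (R : realType) (n m : nat).
Notation st := 'rV[R]_n.
Notation inp := 'rV[R]_m.

Definition pnorm (z : st * inp) : R := Num.max `|z.1| `|z.2|.

Fixpoint traj (f : st -> inp -> st) (u : nat -> inp) (x : st) (k : nat) : st :=
  match k with
  | 0 => x
  | k'.+1 => f (traj f u x k') (u k')
  end.

(* U^T(x): only the first T inputs matter *)
Definition admissible (f : st -> inp -> st) (X : set st) (U : set inp)
  (T : nat) (x : st) (u : nat -> inp) : Prop :=
  (forall k, (k < T)%N -> U (u k)) /\ (forall k, (k <= T)%N -> X (traj f u x k)).

Definition feasible_orbit (f : st -> inp -> st) (X : set st) (U : set inp)
  (p : nat) (Pi : nat -> st * inp) : Prop :=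
  (0 < p)%N /\
  (forall k, (k < p)%N -> X (Pi k).1 /\ U (Pi k).2) /\
  (forall k, (k < p)%N -> (Pi ((k.+1) %% p)%N).1 = f (Pi k).1 (Pi k).2).

Definition minimal_orbit (p : nat) (Pi : nat -> st * inp) : Prop :=
  forall k j, (k < p)%N -> (j < p)%N -> (Pi k).1 = (Pi j).1 -> k = j.

Definition avg_cost (ell : st -> inp -> R) (p : nat) (Pi : nat -> st * inp) : R :=
  (\sum_(k < p) ell (Pi k).1 (Pi k).2) / p%:R.

Definition dist_orbit (p : nat) (Pi : nat -> st * inp) (z : st * inp) : R :=
  \big[Num.min/pnorm (z.1 - (Pi 0%N).1, z.2 - (Pi 0%N).2)]_(k < p)
     pnorm (z.1 - (Pi k).1, z.2 - (Pi k).2).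

Definition dist_orbitX (p : nat) (Pi : nat -> st * inp) (x : st) : R :=
  \big[Num.min/`|x - (Pi 0%N).1|]_(k < p) `|x - (Pi k).1|.

Definition betaN (N k : nat) : R := (N - k)%:R / N%:R.

Definition VNbeta (f : st -> inp -> st) (X : set st) (U : set inp)
  (ell : st -> inp -> R) (N : nat) (x : st) : \bar R :=
  ereal_inf ((fun u : nat -> inp =>
     (\sum_(k < N) betaN N k * ell (traj f u x k) (u k))%:E)
     @` [set u | admissible f X U N x u]).

Definition ell_tilde (f : st -> inp -> st) (ell : st -> inp -> R) (ellstar : R)
  (lam : st -> R) (x : st) (u : inp) : R :=
  ell x u - ellstar + lam x - lam (f x u).

Definition Xpi (f : st -> inp -> st) (X : set st) (U : set inp)
  (ell : st -> inp -> R) (ellstar : R) (lam : st -> R) (lambar C : R) (N0 : nat)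
  : set st :=
  [set x | X x /\ forall N, (N0 <= N)%N ->
     (VNbeta f X U ell N x + (- ((N%:R + 1) / 2 * ellstar) + lam x + lambar)%:E
       <= C%:E)%E].

End Defs.

Definition Kinf (R : realType) (a : R -> R) : Prop :=
  {within [set r : R | 0 <= r], continuous a} /\ a 0 = 0 /\
  (forall r s, 0 <= r -> r < s -> a r < a s) /\
  (forall M, exists r, 0 <= r /\ M <= a r).

Definition classL (R : realType) (d : R -> R) : Prop :=
  {within [set r : R | 0 <= r], continuous d} /\
  (forall r, 0 <= r -> 0 <= d r) /\
  (forall r s, 0 <= r -> r < s -> d s < d r) /\
  (d r @[r --> +oo] --> 0).

(* Main.v *)
Require Import Defs.
From HB Require Import structures.
From mathcomp Require Import all_boot all_order all_algebra.
From mathcomp Require Import all_classical all_reals all_analysis.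
From mathcomp Require Import ring lra zify.
Import Order.TTheory GRing.Theory Num.Theory.
Import numFieldNormedType.Exports.
Local Open Scope classical_set_scope.
Local Open Scope ring_scope.
Section A.
Variable R : realType.

Lemma sum_tele_beta (a : nat -> R) (N : nat) : (0 < N)%N ->
  \sum_(k < N) betaN R N k * (a k - a k.+1) = a 0%N - (\sum_(k < N) a k.+1) / N%:R.
Proof.
move=> N0.
have NN : N%:R != 0 :> R by rewrite pnatr_eq0 -lt0n.
have E : forall k : 'I_N, betaN R N k * (a k - a k.+1) =
   (((N - k)%:R * a k - (N - k.+1)%:R * a k.+1) - a k.+1) / N%:R.
  move=> k; rewrite /betaN; have kN := ltn_ord k.
  rewrite (natrB _ (ltnW kN)) (natrB _ kN) -addn1 natrD.
  rewrite mulrAC; congr (_ / _); ring.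
rewrite (eq_bigr _ (fun k _ => E k)) -mulr_suml big_split /= sumrN.
have S1 : \sum_(i < N) ((N - i)%:R * a i - (N - i.+1)%:R * a i.+1) = N%:R * a 0%N.
  have T := @telescope_sumr R 0 N (fun k => (N - k)%:R * a k) (leq0n N).
  rewrite big_mkord subnn subn0 mul0r sub0r in T.
  rewrite -[RHS]opprK -T -sumrN; apply: eq_bigr => i _; by rewrite opprB.
rewrite S1 mulrBl mulrAC mulfV // mul1r.
reflexivity.
Qed.

Lemma sum_betaN (N : nat) : (0 < N)%N ->
  \sum_(k < N) betaN R N k = (N%:R + 1) / 2 :> R.
Proof.
move=> N0; rewrite /betaN -mulr_suml.
have H : forall M, \sum_(k < M) (M - k)%:R = (M%:R * (M%:R + 1)) / 2 :> R.
  elim=> [|M IH]; first by rewrite big_ord0 mul0r mul0r.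
  rewrite big_ord_recl /= subn0.
  under eq_bigr => i _ do rewrite /bump /= add1n subSS.
  by rewrite IH -addn1 natrD; field.
rewrite H; field; rewrite ?pnatr_eq0 -?lt0n //.
Qed.

Lemma count_tail (N M : nat) :
  \sum_(k < N) (if (N <= k + M)%N then 1 else 0 : R) <= M%:R.
Proof.
have H : forall c P, \sum_(k < P) (if (c <= k)%N then 1 else 0 : R) <= (P - c)%:R.
  move=> c; elim=> [|P IH]; first by rewrite big_ord0.
  rewrite big_ord_recr /=; case: (leqP c P) => cP.
    rewrite subSn // -addn1 natrD lerD2r //.
  rewrite addr0; apply: (le_trans IH); rewrite ler_nat; lia.
apply: (le_trans _ (le_trans (H (N - M)%N N) _)).
  apply: ler_sum => k _; rewrite leq_subLR addnC //.
rewrite ler_nat; lia.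
Qed.

Lemma fin_min (p : nat) (Q : nat -> R -> Prop) :
  (forall i, (i < p)%N -> exists2 g, 0 < g & forall g', 0 < g' -> g' <= g -> Q i g') ->
  exists2 g, 0 < g & forall i, (i < p)%N -> Q i g.
Proof.
elim: p Q => [|p IH] Q H; first by exists 1 => //.
have [g1 g10 Hg1] : exists2 g, 0 < g & forall i, (i < p)%N -> forall g', 0 < g' -> g' <= g -> Q i g'.
  apply: (IH (fun i g => forall g', 0 < g' -> g' <= g -> Q i g')) => i ip.
  have [g g0 Hg] := H i (ltnW ip).
  exists g => // g' g'0 g'g g'' g''0 g''g; apply: Hg => //; exact: le_trans g''g g'g.
have [g2 g20 Hg2] := H p (ltnSn p).
exists (Num.min g1 g2); first by rewrite lt_min g10 g20.
move=> i; rewrite ltnS leq_eqVlt => /orP[/eqP->|ip].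
  by apply: Hg2; rewrite ?lt_min ?g10 ?g20 // ge_min lexx orbT.
by apply: Hg1 => //; rewrite ?lt_min ?g10 ?g20 // ge_min lexx.
Qed.

End A.
Section B0.
Variable R : realType.
Lemma cont_pt (V1 V2 W : normedModType R) (g : V1 * V2 -> W) (A : set (V1 * V2)) z :
  {within A, continuous g} -> A z -> forall e, 0 < e ->
  exists2 r, 0 < r & forall w, A w -> `|z.1 - w.1| < r -> `|z.2 - w.2| < r -> `|g z - g w| < e.
Proof.
move=> /subspace_continuousP H Az e e0.
have := H z Az; move/cvg_ballP => /(_ e e0).
rewrite /= near_withinE => /nbhs_ballP [r /= r0 Hr].
exists r => // w Aw h1 h2.
have bw : ball z r w by split; rewrite /= -ball_normE.
by have := Hr w bw Aw; rewrite /from_subspace -ball_normE.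
Qed.
End B0.
Section B.
Variables (R : realType) (n m : nat) (f : 'rV[R]_n -> 'rV[R]_m -> 'rV[R]_n)
  (ell : 'rV[R]_n -> 'rV[R]_m -> R) (X : set 'rV[R]_n) (U : set 'rV[R]_m)
  (p : nat) (Pi : nat -> 'rV[R]_n * 'rV[R]_m) (lam : 'rV[R]_n -> R) (lambar : R).
Hypothesis HPi : feasible_orbit f X U p Pi.
Hypothesis HPimin : minimal_orbit p Pi.
Hypothesis Hlambar : forall x, X x -> `|lam x| <= lambar.

Lemma Kinf_ge0 (a : R -> R) r : Kinf a -> 0 <= r -> 0 <= a r.
Proof.
move=> [_ [a0 [ai _]]] r0; rewrite le_eqVlt in r0; case/orP: r0 => [/eqP<-|r0].
  by rewrite a0.
by rewrite -a0 ltW // ai.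
Qed.

Lemma Kinf_le (a : R -> R) r s : Kinf a -> 0 <= r -> r <= s -> a r <= a s.
Proof.
move=> [_ [a0 [ai _]]] r0; rewrite le_eqVlt => /orP[/eqP->//|rs].
by rewrite ltW // ai.
Qed.

Lemma Kinf_gt0 (a : R -> R) r : Kinf a -> 0 < r -> 0 < a r.
Proof. by move=> [_ [a0 [ai _]]] r0; rewrite -a0 ai. Qed.

Lemma p_gt0 : (0 < p)%N.
Proof. by case: HPi. Qed.

Lemma lambar_ge0 : 0 <= lambar.
Proof.
case: HPi => p0 [H1 _]; have [X0 _] := H1 0%N p0.
exact: (le_trans (normr_ge0 _) (Hlambar _ X0)).
Qed.

Definition lamstar := (\sum_(i < p) lam (Pi i).1) / p%:R.

Lemma lamstar_bound : `|lamstar| <= lambar.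
Proof.
case: HPi => p0 [H1 _].
have pp : 0 < p%:R :> R by rewrite ltr0n.
rewrite /lamstar normrM normfV (gtr0_norm pp) ler_pdivrMr //.
apply: (le_trans (ler_norm_sum _ _ _)).
have -> : lambar * p%:R = \sum_(i < p) lambar by rewrite sumr_const card_ord mulr_natr.
rewrite ler_sum // => i _.
by apply: Hlambar; case: (H1 i (ltn_ord i)).
Qed.

Definition hh (j : nat) := \sum_(i < j) (lam (Pi i).1 - lamstar).

Lemma hh_step j : (j < p)%N -> hh ((j.+1) %% p) - hh j = lam (Pi j).1 - lamstar.
Proof.
move=> jp; have hS : hh j.+1 = hh j + (lam (Pi j).1 - lamstar) by rewrite /hh big_ord_recr.
rewrite leq_eqVlt in jp; case/orP: jp => [/eqP jp|jp].
  rewrite jp modnn.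
  have h0 : hh 0 = 0 by rewrite /hh big_ord0.
  have hp : hh p = 0.
    rewrite /hh big_split /= sumrN sumr_const card_ord /lamstar.
    have pp : p%:R != 0 :> R by rewrite pnatr_eq0 -lt0n p_gt0.
    by rewrite -[X in _ - X]mulr_natr divfK // subrr.
  rewrite -jp hS in hp; move/eqP: hp; rewrite addr_eq0 => /eqP ->.
  by rewrite h0 sub0r opprK.
by rewrite modn_small // hS addrC addKr.
Qed.

Definition eta (g : R) (x : 'rV[R]_n) :=
  \sum_(j < p) (if `|x - (Pi j).1| < g then hh j else 0).

Definition HH := \sum_(j < p) `|hh j|.

Lemma eta_bound g x : `|eta g x| <= HH.
Proof.
apply: (le_trans (ler_norm_sum _ _ _)); apply: ler_sum => j _.
by case: ifP => _; rewrite ?normr0 ?normr_ge0.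
Qed.

Lemma HH_ge0 : 0 <= HH.
Proof. by apply: sumr_ge0 => j _; exact: normr_ge0. Qed.

Lemma eta_eq g x j : (forall i k, (i < p)%N -> (k < p)%N -> i <> k ->
     2 * g <= `|(Pi i).1 - (Pi k).1|) ->
  (j < p)%N -> `|x - (Pi j).1| < g -> eta g x = hh j.
Proof.
move=> Hsep jp xj; rewrite /eta (bigD1 (Ordinal jp)) //= xj big1 ?addr0 //.
move=> i /eqP ij; case: ifP => // xi.
exfalso; have := Hsep i j (ltn_ord i) jp.
have ij' : nat_of_ord i <> j by move=> E; apply: ij; apply: val_inj.
move=> /(_ ij'); apply/negP; rewrite -ltNge.
rewrite (_ : (Pi i).1 - (Pi j).1 = ((x - (Pi j).1) - (x - (Pi i).1))); last by rewrite opprB [RHS]addrC addrA subrK.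
apply: (le_lt_trans (ler_normB _ _)).
by rewrite mulr2n mulrDl mul1r; apply: ltrD.
Qed.

Lemma adm_step N x u k : admissible f X U N x u -> (k < N)%N ->
  [/\ X (traj f u x k), U (u k) & X (traj f u x k.+1)].
Proof. by move=> [HU HX] kN; split; [apply: HX; exact: ltnW | exact: HU | exact: HX]. Qed.

Lemma pnorm_ge1 (a : 'rV[R]_n) (b : 'rV[R]_m) : `|a| <= pnorm (a, b).
Proof. by rewrite /pnorm le_max lexx. Qed.

Lemma pnorm_ge0 (a : 'rV[R]_n) (b : 'rV[R]_m) : 0 <= pnorm (a, b).
Proof. exact: (le_trans (normr_ge0 a) (pnorm_ge1 a b)). Qed.

Lemma dist_ge z d : (forall j, (j < p)%N -> d <= pnorm (z.1 - (Pi j).1, z.2 - (Pi j).2)) ->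
  d <= dist_orbit p Pi z.
Proof.
move=> H; rewrite /dist_orbit; apply: (big_ind (fun v => d <= v)).
- exact: H p_gt0.
- by move=> a b da db; rewrite le_min da db.
- by move=> i _; exact: H (ltn_ord i).
Qed.

Lemma dist_ge0 z : 0 <= dist_orbit p Pi z.
Proof. by apply: dist_ge => j _; exact: pnorm_ge0. Qed.

Lemma sep_exists : exists2 g : R, 0 < g & forall i k, (i < p)%N -> (k < p)%N -> i <> k ->
     2 * g <= `|(Pi i).1 - (Pi k).1|.
Proof.
have := @fin_min R p (fun i g => forall k, (k < p)%N -> i <> k -> 2 * g <= `|(Pi i).1 - (Pi k).1|).
case=> [i ip|g g0 Hg]; last by exists g => // i k ip kp; apply: Hg.
have := @fin_min R p (fun k g => i <> k -> 2 * g <= `|(Pi i).1 - (Pi k).1|).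
case=> [k kp|g g0 Hg]; last first.
  exists g => // g' g'0 g'g k kp ik.
  by apply: (le_trans _ (Hg k kp ik)); rewrite ler_pM2l.
case: (eqVneq i k) => [->|ik].
  by exists 1 => // g' _ _ []. 
have ne : (Pi i).1 != (Pi k).1.
  by apply/eqP => E; rewrite (HPimin _ _ ip kp E) eqxx in ik.
exists (`|(Pi i).1 - (Pi k).1| / 2).
  by rewrite divr_gt0 // normr_gt0 subr_eq0.
move=> g' g'0 g'g _; rewrite -ler_pdivlMl //.
by rewrite mulrC.
Qed.

Lemma pnorm_ge2 (a : 'rV[R]_n) (b : 'rV[R]_m) : `|b| <= pnorm (a, b).
Proof. by rewrite /pnorm le_max lexx orbT. Qed.

Hypothesis Hfc : {within [set z | X z.1 /\ U z.2], continuous (fun z => f z.1 z.2)}.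

Lemma cont_exists g : 0 < g -> exists2 r : R, 0 < r & forall j, (j < p)%N ->
  forall x u, X x -> U u -> pnorm (x - (Pi j).1, u - (Pi j).2) < r ->
  `|f x u - (Pi ((j.+1) %% p)).1| < g.
Proof.
move=> g0.
apply: (@fin_min R p (fun j r => forall x u, X x -> U u -> pnorm (x - (Pi j).1, u - (Pi j).2) < r ->
  `|f x u - (Pi ((j.+1) %% p)).1| < g)) => j jp.
case: HPi => _ [H1 H2].
have Az : [set z | X z.1 /\ U z.2] (Pi j) by exact: H1.
have [r r0 Hr] := @cont_pt R _ _ _ _ _ _ Hfc Az g g0.
exists r => // r' r'0 r'r x u Xx Uu pn.
rewrite H2 // distrC.
apply: (Hr (x, u)) => //=; rewrite distrC.
  exact: (lt_le_trans (le_lt_trans (pnorm_ge1 _ _) pn) r'r).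
exact: (lt_le_trans (le_lt_trans (pnorm_ge2 _ _) pn) r'r).
Qed.

Lemma Kinf_small (a : R -> R) e : Kinf a -> 0 < e ->
  exists2 d, 0 < d & forall w, 0 <= w -> w < d -> a w < e.
Proof.
move=> [Hc [a0 _]] e0.
have /subspace_continuousP H := Hc.
have A0 : [set r : R | 0 <= r] 0 by rewrite /= lexx.
have := H 0 A0; move/cvg_ballP => /(_ e e0).
rewrite /= near_withinE => /nbhs_ballP [r /= r0 Hr].
exists r => // w w0 wr.
have bw : ball (0 : R) r w by rewrite -ball_normE /= sub0r normrN ger0_norm.
have := Hr w bw w0; rewrite /from_subspace -ball_normE /= a0 sub0r normrN.
exact: le_lt_trans (ler_norm _).
Qed.

Variables (alpha alam : R -> R).
Hypothesis Halpha : Kinf alpha.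
Hypothesis HA3 : forall x u, X x -> U u -> X (f x u) ->
       alpha (dist_orbit p Pi (x, u))
         <= ell_tilde f ell (avg_cost ell p Pi) lam x u.
Hypothesis Halam : Kinf alam.
Hypothesis HA15 : forall x k, X x -> (k < p)%N ->
       `|lam x - lam (Pi k).1| <= alam `|x - (Pi k).1|.

Local Notation lt := (ell_tilde f ell (avg_cost ell p Pi) lam).

Definition Good (B : R) N x u := (0 < N)%N /\ X x /\ admissible f X U N x u /\
  \sum_(k < N) betaN R N k * lt (traj f u x k) (u k) <= B.

Lemma lt_ge0 x u : X x -> U u -> X (f x u) -> 0 <= lt x u.
Proof.
move=> Xx Uu Xf; apply: (le_trans _ (HA3 _ _ Xx Uu Xf)).
apply: Kinf_ge0 => //; exact: dist_ge0.
Qed.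

Lemma betaN_ge0 N k : 0 <= betaN R N k.
Proof. by rewrite /betaN divr_ge0. Qed.

Theorem key B e : 0 < e -> exists N1 : nat, forall N x u, (N1 <= N)%N -> Good B N x u ->
  `|(\sum_(k < N) lam (traj f u x k.+1)) / N%:R - lamstar| <= e.
Proof.
move=> e0.
have [g g0 Hsep] := sep_exists.
have [r r0 Hr] := cont_exists g g0.
have e30 : 0 < e / 3 by rewrite divr_gt0.
have [d1 d10 Hd1] := Kinf_small alam (e / 3) Halam e30.
set d := Num.min (d1 / 2) (Num.min r g).
have d0 : 0 < d by rewrite !lt_min r0 g0 divr_gt0.
have dd1 : d < d1.
  have : d <= d1 / 2 by rewrite /d ge_min lexx.
  move=> h; apply: (le_lt_trans h); rewrite ltr_pdivrMr //; lra.
have dr : d <= r by rewrite /d !ge_min lexx !orbT.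
have dg : d <= g by rewrite /d !ge_min lexx !orbT.
have ad : alam d < e / 3 := Hd1 d (ltW d0) dd1.
have ad0 : 0 < alpha d := Kinf_gt0 alpha d Halpha d0.
set K := 2 * lambar + 2 * HH.
have K0 : 0 <= K by have := lambar_ge0; have := HH_ge0; rewrite /K; lra.
set M := (Num.Def.archi_bound (3 * K * `|B| / (e * alpha d))).+1.
have HM : 3 * K * `|B| / (e * alpha d) < M%:R.
  have h0 : 0 <= 3 * K * `|B| / (e * alpha d).
    by apply: divr_ge0; apply: mulr_ge0 => //; try apply: mulr_ge0 => //; apply: ltW.
  apply: (lt_le_trans (archi_boundP h0)); by rewrite /M ler_nat.
have M0 : 0 < M%:R :> R by rewrite ltr0n.
have HMB : K * `|B| / (M%:R * alpha d) <= e / 3.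
  rewrite ler_pdivrMr ?mulr_gt0 //.
  rewrite ltr_pdivrMr ?mulr_gt0 // in HM.
  have : 0 <= K * `|B| by rewrite mulr_ge0.
  move: HM; set t := M%:R * (e * alpha d); set q := K * `|B|.
  have -> : e / 3 * (M%:R * alpha d) = t / 3 by rewrite /t; field.
  have -> : 3 * K * `|B| = 3 * q by rewrite /q mulrA.
  lra.
set c3 := K * M%:R + 2 * HH + 2 * lambar.
set N1 := Num.Def.archi_bound (c3 * 3 / e).
have HN1 : c3 * 3 / e < N1%:R.
  apply: archi_boundP; apply: divr_ge0; last exact: ltW.
  apply: mulr_ge0 => //; rewrite /c3; have := HH_ge0; have := lambar_ge0.
  have : 0 <= K * M%:R by apply: mulr_ge0.
  lra.
exists N1 => N x u N1N [N0 [Xx [adm HB]]].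
have Nr0 : 0 < N%:R :> R by rewrite ltr0n.
have Nn0 : N%:R != 0 :> R by rewrite pnatr_eq0 -lt0n.
pose a k := lam (traj f u x k).
pose et k := eta g (traj f u x k).
pose err k := a k - lamstar - (et k.+1 - et k).
pose lk k := lt (traj f u x k) (u k).
pose w k := (N%:R / M%:R / alpha d) * (betaN R N k * lk k) +
   (if (N <= k + M)%N then 1 else 0).
have c0 : 0 <= N%:R / M%:R / alpha d by rewrite !divr_ge0 // ltW.
have Ew : forall k : 'I_N, `|err k| <= alam d + K * w k.
  move=> k; have kN := ltn_ord k.
  have [Xk Uk Xk1] := adm_step _ _ _ _ adm kN.
  have lk0 : 0 <= lk k by exact: lt_ge0 _ _ Xk Uk Xk1.
  have w0 : 0 <= w k.
    rewrite /w; apply: addr_ge0; first by apply: mulr_ge0 => //; apply: mulr_ge0 => //; exact: betaN_ge0.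
    by case: ifP.
  have al0 : 0 <= alam d by apply: Kinf_ge0 => //; exact: ltW.
  case: (pselect (exists j, (j < p)%N /\ pnorm (traj f u x k - (Pi j).1, u k - (Pi j).2) < d)).
    case=> j [jp pj].
    have h1 : `|traj f u x k - (Pi j).1| < g.
      exact: (le_lt_trans (pnorm_ge1 _ _) (lt_le_trans pj dg)).
    have e1 : et k = hh j := eta_eq g _ j Hsep jp h1.
    have h2 := Hr j jp _ _ Xk Uk (lt_le_trans pj dr).
    have e2 : et k.+1 = hh (j.+1 %% p) := eta_eq g _ _ Hsep (ltn_pmod _ p_gt0) h2.
    have -> : err k = a k - lam (Pi j).1.
      by rewrite /err e1 e2 hh_step //; ring.
    have hxd : `|traj f u x k - (Pi j).1| <= d := ltW (le_lt_trans (pnorm_ge1 _ _) pj).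
    apply: (le_trans (HA15 _ _ Xk jp)).
    apply: (le_trans (Kinf_le alam _ _ Halam (normr_ge0 _) hxd)).
    by rewrite lerDl mulr_ge0.
  move=> nj.
  have dd : d <= dist_orbit p Pi (traj f u x k, u k).
    apply: dist_ge => j jp; rewrite leNgt; apply/negP => h; apply: nj; exists j; split => //.
  have hl : alpha d <= lk k.
    exact: (le_trans (Kinf_le alpha d _ Halpha (ltW d0) dd) (HA3 _ _ Xk Uk Xk1)).
  have hK : `|err k| <= K.
    apply: (le_trans (ler_normB _ _)); rewrite /K.
    apply: lerD; apply: (le_trans (ler_normB _ _)); rewrite mulr2n mulrDl mul1r.
      by apply: lerD; [exact: Hlambar | exact: lamstar_bound].
    by apply: lerD; exact: eta_bound.
  have w1 : 1 <= w k.
    rewrite /w; case: ifP => hN.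
      have : 0 <= N%:R / M%:R / alpha d * (betaN R N k * lk k).
        by apply: mulr_ge0 => //; apply: mulr_ge0 => //; exact: betaN_ge0.
      lra.
    move/negbT: hN; rewrite -ltnNge => hN.
    have h1 : 1 <= (N - k)%:R / M%:R :> R.
      by rewrite ler_pdivlMr // mul1r ler_nat leq_subRL ?(ltnW kN) // ltnW.
    have h2 : 1 <= lk k / alpha d by rewrite ler_pdivlMr // mul1r.
    have -> : N%:R / M%:R / alpha d * (betaN R N k * lk k) = ((N - k)%:R / M%:R) * (lk k / alpha d).
      by rewrite /betaN; field; rewrite (gt_eqF ad0) (gt_eqF M0) Nn0.
    rewrite addr0; apply: (le_trans h1); rewrite -[X in X <= _]mulr1 ler_wpM2l //.
  apply: (le_trans hK); apply: (le_trans _ (_ : K * w k <= _)).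
    by rewrite -[X in X <= _]mulr1 ler_wpM2l.
  by rewrite lerDr.
have E1 : \sum_(k < N) (a k.+1 - lamstar) =
    \sum_(k < N) err k + (et N - et 0%N) + (a N - a 0%N).
  rewrite -(telescope_sumr et (leq0n N)) -(telescope_sumr a (leq0n N)) !big_mkord -!big_split /=.
  by apply: eq_bigr => k _; rewrite /err; ring.
have Sw : \sum_(k < N) w k <= N%:R / M%:R / alpha d * B + M%:R.
  rewrite big_split /= -mulr_sumr; apply: lerD.
    by rewrite ler_wpM2l //; exact: HB.
  exact: count_tail.
have XN : X (traj f u x N) by case: adm => _ H; exact: H.
have X0 : X (traj f u x 0) by case: adm => _ H; exact: H.
have S1 : `|\sum_(k < N) (a k.+1 - lamstar)| <= \sum_(k < N) `|err k| + 2 * HH + 2 * lambar.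
  have T1 : `|\sum_(k < N) err k| <= \sum_(k < N) `|err k| := ler_norm_sum _ _ _.
  have T2 : `|et N - et 0%N| <= 2 * HH.
    rewrite mulr2n mulrDl mul1r; apply: (le_trans (ler_normB _ _)).
    by apply: lerD; exact: eta_bound.
  have T3 : `|a N - a 0%N| <= 2 * lambar.
    rewrite mulr2n mulrDl mul1r; apply: (le_trans (ler_normB _ _)).
    by apply: lerD; exact: Hlambar.
  have T4 := ler_normD (\sum_(k < N) err k + (et N - et 0%N)) (a N - a 0%N).
  have T5 := ler_normD (\sum_(k < N) err k) (et N - et 0%N).
  rewrite E1; lra.
have S2 : \sum_(k < N) `|err k| <= N%:R * alam d + K * (N%:R / M%:R / alpha d * B + M%:R).
  apply: (le_trans (ler_sum _ (fun k _ => Ew k))).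
  rewrite big_split /= sumr_const card_ord -mulr_sumr; apply: lerD.
    by rewrite mulr_natl.
  by rewrite ler_wpM2l //; exact: Sw.
have F1 : N%:R * alam d <= N%:R * (e / 3) by rewrite ler_wpM2l // ltW.
have F2 : K * (N%:R / M%:R / alpha d * B) <= N%:R * (e / 3).
  have -> : K * (N%:R / M%:R / alpha d * B) = N%:R * (K * B / (M%:R * alpha d)).
    by field; rewrite (gt_eqF ad0) (gt_eqF M0).
  rewrite ler_wpM2l //; apply: (le_trans _ HMB).
  apply: ler_wpM2r; first by rewrite invr_ge0 mulr_ge0 // ltW.
  apply: ler_wpM2l => //; exact: ler_norm.
have F3 : c3 <= N%:R * (e / 3).
  have : c3 * 3 / e < N%:R by apply: (lt_le_trans HN1); rewrite ler_nat.
  rewrite ltr_pdivrMr // => h; rewrite mulrCA mulrA ler_pdivlMr //; lra.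
have E2 : (\sum_(k < N) lam (traj f u x k.+1)) / N%:R - lamstar =
    (\sum_(k < N) (a k.+1 - lamstar)) / N%:R.
  rewrite sumrB sumr_const card_ord -(mulr_natr lamstar N) /a; field.
  by rewrite Nn0.
rewrite E2 normrM normfV (gtr0_norm Nr0) ler_pdivrMr //.
move: S1 S2 F1 F2 F3; rewrite /c3; lra.
Qed.

End B.
Section C.
Variable R : realType.

Lemma lip_cont (g : R -> R) (L : R) : 0 < L ->
  (forall a b, `|g a - g b| <= L * `|a - b|) -> continuous g.
Proof.
move=> L0 H x; apply/cvgrPdist_lt => eps eps0.
apply/nbhs_ballP; exists (eps / L) => /=; first by rewrite divr_gt0.
move=> y; rewrite /ball_ /= => hy.
apply: (le_lt_trans (H x y)).
by rewrite -ltr_pdivlMl // mulrC.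
Qed.

Lemma inv_lip (a b : R) : `|(1 + `|a|)^-1 - (1 + `|b|)^-1| <= 1 * `|a - b|.
Proof.
have a1 : 0 < 1 + `|a| by rewrite ltr_wpDr.
have b1 : 0 < 1 + `|b| by rewrite ltr_wpDr.
have -> : (1 + `|a|)^-1 - (1 + `|b|)^-1 = (`|b| - `|a|) / ((1 + `|a|) * (1 + `|b|)).
  by field; rewrite (gt_eqF a1) (gt_eqF b1).
rewrite normrM normfV (gtr0_norm (mulr_gt0 a1 b1)) mul1r ler_pdivrMr ?mulr_gt0 //.
apply: (le_trans (ler_dist_dist _ _)); rewrite distrC.
rewrite -[X in X <= _]mulr1 ler_wpM2l //.
have : 1 <= (1 + `|a|) * (1 + `|b|).
  have ha : 1 <= 1 + `|a| by rewrite lerDl.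
  have hb : 1 <= 1 + `|b| by rewrite lerDl.
  by rewrite -[X in X <= _](mulr1 1); apply: ler_pM.
by [].
Qed.

Lemma classL_major (P : nat -> R -> Prop) (Mb : R) :
  0 <= Mb -> (forall N v, P N v -> v <= Mb) ->
  (forall e, 0 < e -> exists N1 : nat, forall N v, (N1 <= N)%N -> P N v -> v <= e) ->
  exists d0 : R -> R, (forall N v, P N v -> v <= d0 N%:R) /\ (forall r, 0 <= d0 r) /\
    classL (fun r => 2 * d0 r + (1 + `|r|)^-1).
Proof.
move=> Mb0 HMb Hlim.
pose S r := [set y : R | y = 0 \/ exists N v, P N v /\ y = v - Num.max 0 (r - N%:R)].
pose d0 r := sup (S r).
have hne r : S r !=set0 by exists 0; left.
have hub r : ubound (S r) Mb.
  move=> y [->//|[N [v [Pv ->]]]].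
  by apply: (le_trans _ (HMb _ _ Pv)); rewrite lerBlDr lerDl le_max lexx.
have hub' r : has_ubound (S r) by exists Mb; exact: hub.
have d0_ge N v : P N v -> v <= d0 N%:R.
  move=> Pv; apply: (ub_le_sup (hub' _)); right; exists N, v; split => //.
  by rewrite subrr maxxx subr0.
have d0_ge0 r : 0 <= d0 r by apply: (ub_le_sup (hub' _)); left.
have d0_lip a b : d0 a <= d0 b + `|a - b|.
  apply: ge_sup => // y [->|[N [v [Pv ->]]]].
    by apply: addr_ge0 => //; exact: normr_ge0.
  have h1 : v - Num.max 0 (b - N%:R) <= d0 b.
    by apply: (ub_le_sup (hub' _)); right; exists N, v.
  have h2 : Num.max 0 (b - N%:R) <= Num.max 0 (a - N%:R) + `|a - b|.
    rewrite ge_max; apply/andP; split.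
      by apply: addr_ge0; rewrite ?le_max ?lexx ?normr_ge0.
    have h3 : a - N%:R <= Num.max 0 (a - N%:R) by rewrite le_max lexx orbT.
    have h4 : b - a <= `|a - b| by rewrite distrC ler_norm.
    lra.
  lra.
have d0_mono a b : a <= b -> d0 b <= d0 a.
  move=> ab; apply: ge_sup => // y [->|[N [v [Pv ->]]]]; first exact: d0_ge0.
  apply: (le_trans _ (ub_le_sup (hub' a) _)); last by right; exists N, v.
  have : Num.max 0 (a - N%:R) <= Num.max 0 (b - N%:R).
    rewrite ge_max; apply/andP; split; rewrite le_max ?lexx //.
    by apply/orP; right; lra.
  lra.
have d0_lim e : 0 < e -> exists T : R, forall r, T <= r -> d0 r <= e.
  move=> e0; have [N1 HN1] := Hlim e e0.
  exists (N1%:R + Mb) => r Tr; apply: ge_sup => // y [->|[N [v [Pv ->]]]]; first exact: ltW.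
  case: (leqP N1 N) => hN.
    have := HN1 N v hN Pv; have : 0 <= Num.max 0 (r - N%:R) by rewrite le_max lexx.
    lra.
  have hv := HMb _ _ Pv.
  have hN' : N%:R <= N1%:R :> R by rewrite ler_nat ltnW.
  have : r - N%:R <= Num.max 0 (r - N%:R) by rewrite le_max lexx orbT.
  lra.
exists d0; split => //; split => //.
split; [|split; [|split]].
- apply: continuous_subspaceT; apply: (@lip_cont _ 3) => // a b.
  have h1 := d0_lip a b; have h2 := d0_lip b a; rewrite distrC in h2.
  have h3 := inv_lip a b.
  have h4 : `|d0 a - d0 b| <= `|a - b|.
    by rewrite ler_norml; apply/andP; split; lra.
  set ia := (1 + `|a|)^-1 in h3 *; set ib := (1 + `|b|)^-1 in h3 *.
  have h5 := ler_normD (2 * (d0 a - d0 b)) (ia - ib).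
  have -> : 2 * d0 a + ia - (2 * d0 b + ib) = 2 * (d0 a - d0 b) + (ia - ib) by ring.
  rewrite normrM ger0_norm // in h5.
  lra.
- move=> r r0; apply: addr_ge0; first by rewrite mulr_ge0.
  by rewrite invr_ge0 addr_ge0.
- move=> r s r0 rs.
  have h1 := d0_mono r s (ltW rs).
  have h2 : (1 + `|s|)^-1 < (1 + `|r|)^-1.
    have s0 : 0 <= s by exact: (le_trans r0 (ltW rs)).
    have hr1 : 0 < 1 + `|r| by rewrite ltr_wpDr.
    have hs1 : 0 < 1 + `|s| by rewrite ltr_wpDr.
    rewrite ltf_pV2 ?posrE // ltrD2l (ger0_norm r0) (ger0_norm s0) //.
  lra.
- apply/cvgrPdist_le => eps eps0.
  have [T HT] := d0_lim (eps / 4) (divr_gt0 eps0 (ltr0n _ 4)).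
  apply: filterS (nbhs_pinfty_ge (num_real (Num.max T (2 / eps)))) => r hr.
  rewrite ge_max in hr; case/andP: hr => hT he.
  have h1 := HT r hT.
  have r0 : 0 <= r by apply: le_trans he; rewrite divr_ge0 // ltW.
  have h2 : (1 + `|r|)^-1 <= eps / 2.
    rewrite ger0_norm // -[X in _ <= X]invf_div lef_pV2 ?posrE ?divr_gt0 ?ltr_wpDr //.
    lra.
  have h3 : 0 <= (1 + `|r|)^-1 by rewrite invr_ge0 addr_ge0.
  rewrite sub0r normrN ger0_norm; last by apply: addr_ge0 => //; rewrite mulr_ge0.
  lra.
Qed.

End C.
Section D.
Variables (R : realType) (n m : nat) (f : 'rV[R]_n -> 'rV[R]_m -> 'rV[R]_n)
  (X : set 'rV[R]_n) (U : set 'rV[R]_m).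

Definition Jc (c : 'rV[R]_n -> 'rV[R]_m -> R) N z u :=
  \sum_(k < N) betaN R N k * c (traj f u z k) (u k).

Lemma V_le c N z u : admissible f X U N z u -> (VNbeta f X U c N z <= (Jc c N z u)%:E)%E.
Proof. by move=> adm; apply: ereal_inf_lbound; exists u. Qed.

Lemma V_ge c N z (a : R) : (forall u, admissible f X U N z u -> a <= Jc c N z u) ->
  (a%:E <= VNbeta f X U c N z)%E.
Proof. by move=> H; apply: le_ereal_inf_tmp => _ [u adm <-]; rewrite lee_fin; apply: H. Qed.

Lemma V_lt c N z (a : R) : (VNbeta f X U c N z < a%:E)%E ->
  exists2 u, admissible f X U N z u & Jc c N z u < a.
Proof. by move/ereal_inf_lt => [_ [u adm <-]]; rewrite lte_fin; exists u. Qed.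

Lemma V_fin c N z (lo hi : R) : (lo%:E <= VNbeta f X U c N z)%E ->
  (VNbeta f X U c N z <= hi%:E)%E -> exists v : R, VNbeta f X U c N z = v%:E.
Proof.
case: (VNbeta f X U c N z) => [r _ _| _ |]; first by exists r.
  by rewrite leye_eq.
by rewrite leeNy_eq.
Qed.

End D.
Arguments lambar_ge0 {R n m f X U p Pi lam lambar}.
Arguments lamstar_bound {R n m f X U p Pi lam lambar}.
Arguments key {R n m f ell X U p Pi lam lambar} HPi HPimin Hlambar Hfc {alpha alam} Halpha HA3 Halam HA15 B {e}.
Arguments adm_step {R n m f X U N x u k}.
Arguments lt_ge0 {R n m f ell X U p Pi lam} HPi {alpha} Halpha HA3 {x u}.
Arguments V_le {R n m f X U c N z u}.
Arguments V_ge {R n m f X U c N z a}.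
Arguments V_lt {R n m f X U c N z a}.
Arguments classL_major {R} P Mb.
Arguments Jc {R n m} f c N z u.
Arguments sum_betaN {R N}. Arguments sum_tele_beta {R} a {N}.
Arguments V_fin {R n m f X U c N z lo hi}.
Theorem lemma29 (R : realType) (n m : nat)
  (f : 'rV[R]_n -> 'rV[R]_m -> 'rV[R]_n) (ell : 'rV[R]_n -> 'rV[R]_m -> R)
  (X : set 'rV[R]_n) (U : set 'rV[R]_m)
  (pstar : nat) (Pistar : nat -> 'rV[R]_n * 'rV[R]_m)
  (lam : 'rV[R]_n -> R) (lambar : R) (C : R)
  (* (A1) *)
  (HXc : compact X) (HUc : compact U)
  (Hfc : {within [set z | X z.1 /\ U z.2], continuous (fun z => f z.1 z.2)})
  (Hlc : {within [set z | X z.1 /\ U z.2], continuous (fun z => ell z.1 z.2)})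
  (* standing: ell nonnegative *)
  (Hl0 : forall x u, X x -> U u -> 0 <= ell x u)
  (* Pi* is a feasible p*-periodic orbit attaining l* *)
  (HPi : feasible_orbit f X U pstar Pistar)
  (HPiopt : forall p Pi, feasible_orbit f X U p Pi ->
      avg_cost ell pstar Pistar <= avg_cost ell p Pi)
  (* Pi* minimal *)
  (HPimin : minimal_orbit pstar Pistar)
  (* (A3) *)
  (Hlambar : forall x, X x -> `|lam x| <= lambar)
  (HA3 : exists alpha, Kinf alpha /\
     forall x u, X x -> U u -> X (f x u) ->
       alpha (dist_orbit pstar Pistar (x, u))
         <= ell_tilde f ell (avg_cost ell pstar Pistar) lam x u)
  (* (A4) *)
  (HA4 : exists (kappa : R) (M' : nat) (rho : R -> R),
     0 < kappa /\ Kinf rho /\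
     forall j x y, (j < pstar)%N -> X x -> X y ->
       `|x - (Pistar j).1| <= kappa -> `|y - (Pistar j).1| <= kappa ->
       exists u : nat -> 'rV[R]_m, admissible f X U M' x u /\
         traj f u x M' = y /\
         forall k, (k < M')%N ->
           dist_orbit pstar Pistar (traj f u x k, u k)
             <= rho (Num.max (dist_orbitX pstar Pistar x)
                             (dist_orbitX pstar Pistar y)))
  (* (A15) *)
  (HA15c : {within X, continuous lam})
  (HA15 : exists alpha_lam, Kinf alpha_lam /\
     forall x k, X x -> (k < pstar)%N ->
       `|lam x - lam (Pistar k).1| <= alpha_lam `|x - (Pistar k).1|) :
  exists (N0 : nat) (delta2 : R -> R), classL delta2 /\
    forall x y N,
      Xpi f X U ell (avg_cost ell pstar Pistar) lam lambar C N0 x ->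
      Xpi f X U ell (avg_cost ell pstar Pistar) lam lambar C N0 y ->
      (N0 <= N)%N ->
      (VNbeta f X U (ell_tilde f ell (avg_cost ell pstar Pistar) lam) N y
         - (lam y)%:E
         - VNbeta f X U (ell_tilde f ell (avg_cost ell pstar Pistar) lam) N x
         + (lam x)%:E
       <= VNbeta f X U ell N y - VNbeta f X U ell N x + (delta2 N%:R)%:E)%E.
Proof.
have [alpha [Halpha HA3']] := HA3.
have [alam [Halam HA15']] := HA15.
have lb0 : 0 <= lambar := lambar_ge0 HPi Hlambar.
have lstb := lamstar_bound HPi Hlambar.
set ls := avg_cost ell pstar Pistar in HA3' *.
set lst := lamstar R n m pstar Pistar lam in lstb *.
set lt := ell_tilde f ell ls lam in HA3' *.
pose B := `|C| + 2.
have Jid : forall N z u, (0 < N)%N -> Jc f lt N z u =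
    Jc f ell N z u - ls * ((N%:R + 1) / 2) + lam z - (\sum_(k < N) lam (traj f u z k.+1)) / N%:R.
  move=> N z u N0; rewrite /Jc /lt /ell_tilde.
  have -> : \sum_(k < N) betaN R N k * (ell (traj f u z k) (u k) - ls + lam (traj f u z k)
       - lam (f (traj f u z k) (u k))) =
     \sum_(k < N) (betaN R N k * ell (traj f u z k) (u k)) - ls * \sum_(k < N) betaN R N k +
     \sum_(k < N) betaN R N k * (lam (traj f u z k) - lam (traj f u z k.+1)).
    rewrite mulr_sumr -sumrB -big_split /=; apply: eq_bigr => k _ /=; ring.
  rewrite sum_betaN // (sum_tele_beta (fun k => lam (traj f u z k))) //.
  have -> : traj f u z 0 = z by [].
  by rewrite addrA.
have avg_bd : forall N z u, (0 < N)%N -> admissible f X U N z u ->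
    `|(\sum_(k < N) lam (traj f u z k.+1)) / N%:R| <= lambar.
  move=> N z u N0 adm.
  have Nr : 0 < N%:R :> R by rewrite ltr0n.
  rewrite normrM normfV (gtr0_norm Nr) ler_pdivrMr //.
  apply: (le_trans (ler_norm_sum _ _ _)).
  have -> : lambar * N%:R = \sum_(i < N) lambar by rewrite sumr_const card_ord mulr_natr.
  apply: ler_sum => k _; have [_ _ Xk1] := adm_step adm (ltn_ord k).
  exact: Hlambar.
pose P N v := exists z u, Good R n m f ell X U pstar Pistar lam B N z u /\
   v = `|(\sum_(k < N) lam (traj f u z k.+1)) / N%:R - lst|.
have H1 : 0 <= 2 * lambar by rewrite mulr_ge0.
have H2 : forall N v, P N v -> v <= 2 * lambar.
  move=> N v [z [u [[N0 [Xz [adm _]]] ->]]].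
  apply: (le_trans (ler_normB _ _)); have := avg_bd N z u N0 adm; lra.
have H3 : forall e, 0 < e -> exists N1 : nat, forall N v, (N1 <= N)%N -> P N v -> v <= e.
  move=> e e0.
  have [N1 HN1] := key HPi HPimin Hlambar Hfc Halpha HA3' Halam HA15' B e0.
  by exists N1 => N v N1N [z [u [G ->]]]; exact: HN1.
have [d0 [Hd0 [d0ge0 HL]]] := classL_major P (2 * lambar) H1 H2 H3.
exists 1%N, (fun r => 2 * d0 r + (1 + `|r|)^-1); split => //.
move=> x y N [Xx Hx] [Xy Hy] N1.
have N0 : (0 < N)%N := N1.
have Nr : 0 < N%:R :> R by rewrite ltr0n.
pose eps : R := (1 + `|N%:R :> R|)^-1 / 2.
have eps0 : 0 < eps by rewrite divr_gt0 // invr_gt0 ltr_wpDr.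
have eps1 : eps <= 1.
  have i1 : (1 + `|N%:R :> R|)^-1 <= 1 by rewrite invf_le1 ?ltr_wpDr // lerDl.
  rewrite /eps; lra.
have Vl0 : forall z, (0%:E <= VNbeta f X U ell N z)%E.
  move=> z; apply: V_ge => u adm; apply: sumr_ge0 => k _.
  have [Xk Uk _] := adm_step adm (ltn_ord k).
  by apply: mulr_ge0; [exact: betaN_ge0 | exact: Hl0].
have Vt0 : forall z, (0%:E <= VNbeta f X U lt N z)%E.
  move=> z; apply: V_ge => u adm; apply: sumr_ge0 => k _.
  have [Xk Uk Xk1] := adm_step adm (ltn_ord k).
  by apply: mulr_ge0; [exact: betaN_ge0 | exact: (lt_ge0 HPi Halpha HA3' Xk Uk Xk1)].
have finV : forall z, (VNbeta f X U ell N z +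
     (- ((N%:R + 1) / 2 * ls) + lam z + lambar)%:E <= C%:E)%E ->
   exists2 v, VNbeta f X U ell N z = v%:E & v + (- ((N%:R + 1) / 2 * ls) + lam z + lambar) <= C.
  move=> z; have := Vl0 z; case: (VNbeta f X U ell N z) => [v _ H| //|//].
  by exists v => //; rewrite -EFinD lee_fin in H.
have [vx Evx Hvx] := finV x (Hx N N1).
have [vy Evy Hvy] := finV y (Hy N N1).
have [uy admy Jy] : exists2 u, admissible f X U N y u & Jc f ell N y u < vy + eps.
  by apply: V_lt; rewrite Evy lte_fin ltrDl.
set ey := (\sum_(k < N) lam (traj f uy y k.+1)) / N%:R.
have bey := avg_bd N y uy N0 admy; rewrite -/ey in bey.
have Jty := Jid N y uy N0.
have Gy : Good R n m f ell X U pstar Pistar lam B N y uy.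
  split => //; split => //; split => //.
  rewrite -/(Jc f lt N y uy) Jty -/ey /B.
  have := ler_norm C; rewrite ler_norml in bey; case/andP: bey => bey1 bey2.
  lra.
have dy : `|ey - lst| <= d0 N%:R by apply: Hd0; exists y, uy.
have [wy Ewy] : exists wy, VNbeta f X U lt N y = wy%:E.
  apply: (V_fin (Vt0 y) (V_le admy)).
have Hwy : wy <= Jc f lt N y uy by rewrite -lee_fin -Ewy; exact: V_le.
have [ux admx Jx] : exists2 u, admissible f X U N x u & Jc f ell N x u < vx + eps.
  by apply: V_lt; rewrite Evx lte_fin ltrDl.
have bex := avg_bd N x ux N0 admx.
have Jtx := Jid N x ux N0.
have [wx Ewx] : exists wx, VNbeta f X U lt N x = wx%:E.
  apply: (V_fin (Vt0 x) (V_le admx)).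
have Hwx : wx <= Jc f lt N x ux by rewrite -lee_fin -Ewx; exact: V_le.
have Hwx2 : wx <= C + eps.
  apply: (le_trans Hwx); rewrite Jtx.
  rewrite ler_norml in bex; case/andP: bex => bex1 bex2.
  lra.
have [ut admt Jt] : exists2 u, admissible f X U N x u & Jc f lt N x u < wx + eps.
  by apply: V_lt; rewrite Ewx lte_fin ltrDl.
set et := (\sum_(k < N) lam (traj f ut x k.+1)) / N%:R.
have Jtt := Jid N x ut N0.
have Gt : Good R n m f ell X U pstar Pistar lam B N x ut.
  split => //; split => //; split => //.
  rewrite -/(Jc f lt N x ut) /B.
  have := ler_norm C; lra.
have dt : `|et - lst| <= d0 N%:R by apply: Hd0; exists x, ut.
have Hvt : vx <= Jc f ell N x ut by rewrite -lee_fin -Evx; exact: V_le.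
rewrite Ewy Evy Ewx Evx -!EFinB -!EFinD lee_fin.
rewrite ler_norml in dy; case/andP: dy => dy1 dy2.
rewrite ler_norml in dt; case/andP: dt => dt1 dt2.
have e2 : (1 + `|N%:R|)^-1 = 2 * eps by rewrite /eps; field.
rewrite Jtt -/et in Jt.
rewrite Jty -/ey in Hwy.
rewrite e2; lra.
Qed.
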